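(* Let $\mathbb{F}$ be a finite field. For every $k,m,r\in\mathbb{N}$ there exists $n\in\mathbb{N}$ such that for every $c:M^k_{n,k}(\mathbb{F})\to r$ there is $R\in\mathcal{E}_{n,m}(\mathbb{F})$ such that $\tau$ is a factor of $c$ on $R\cdot M^k_{m,k}(\mathbb{F})$, i.e. there is $\widehat{c}:\mathrm{GL}(\mathbb{F}^k)\to r$ with $c(R\cdot A)=\widehat{c}(\tau(R\cdot A))$ for every $A\in M^k_{m,k}(\mathbb{F})$.
   Context: $r$ is identified with $\{0,\dots,r-1\}$. $M^k_{n,m}(\mathbb{F})$ is the set of $n\times m$ matrices over $\mathbb{F}$ of rank $k$. $(u_i)$ denotes the unit vector basis. A $p\times q$ matrix $A$ is in reduced row echelon form (RREF) if there are $p_0\le p$ and a strictly increasing sequence $j_0<\dots<j_{p_0-1}<q$ such that $A u_{j_i}=u_i$ and $\langle A u_j\rangle_{j<j_i}=\langle u_l\rangle_{l<i}$ for every $i<p_0$; $A$ is in reduced column echelon form (RCEF) if its transpose is in RREF. $\mathcal{E}_{n,m}(\mathbb{F})$ is the set of $n\times m$ matrices of rank $m$ in RCEF. $\tau:M^k_{n,k}(\mathbb{F})\to\mathrm{GL}(\mathbb{F}^k)$ assigns to $A$ the unique invertible $k\times k$ matrix $\tau(A)$ such that $A\cdot\tau(A)$ is in RCEF. *)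

(* Defs.v *)
From HB Require Import structures.
From mathcomp Require Import all_boot all_order all_algebra.
Set Implicit Arguments. Unset Strict Implicit. Unset Printing Implicit Defensive.
Import GRing.Theory.
Local Open Scope ring_scope.

Section Echelon.
Variable F : fieldType.

(* A q x p matrix whose row space
   is the span of the columns A u_j, j < t, of A (columns written as rows). *)
Definition colspan_lt (p q : nat) (A : 'M[F]_(p, q)) (t : nat) : 'M[F]_(q, p) :=
  \matrix_(j < q) (if (j < t)%N then row j A^T else 0).

(* Reduced row echelon form, following the paper: there are p0 <= p and a
   strictly increasing j_0 < ... < j_{p0-1} < q with A u_{j_i} = u_i and
   <A u_j>_{j < j_i} = <u_l>_{l < i} for i < p0; additionally (standard
   convention, implicit in the paper) all columns lie in <u_l>_{l < p0},
   i.e. rows p0,...,p-1 are zero. *)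
Definition is_rref (p q : nat) (A : 'M[F]_(p, q)) : bool :=
  [exists p0 : 'I_p.+1, exists j : {ffun 'I_p -> 'I_q},
    [&& [forall i1 : 'I_p, forall i2 : 'I_p,
           ((i1 < i2)%N && (i2 < p0)%N) ==> (j i1 < j i2)%N],
        [forall i : 'I_p, (i < p0)%N ==>
           ((col (j i) A == delta_mx i (0 : 'I_1)) &&
            (colspan_lt A (j i) == (pid_mx i : 'M[F]_p))%MS)]
      & (A^T == (pid_mx p0 : 'M[F]_p))%MS]].

Definition is_rcef (p q : nat) (A : 'M[F]_(p, q)) : bool := is_rref A^T.

Definition in_E (n m : nat) (R : 'M[F]_(n, m)) : bool :=
  (\rank R == m) && is_rcef R.
End Echelon.

(* tau(A): the (unique, for A of rank k) invertible k x k matrix T with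
   A *m T in RCEF; picked from the finite type of matrices. *)
Definition tau (F : finFieldType) (n k : nat) (A : 'M[F]_(n, k)) : 'M[F]_k :=
  match [pick T : 'M[F]_k | (T \in unitmx) && is_rcef (A *m T)] with
  | Some T => T
  | None => 1%:M
  end.

(* Main.v *)
Require Import Defs.
From HB Require Import structures.
From mathcomp Require Import all_boot all_order all_algebra.
From mathcomp Require Import zify ring perm.
Set Implicit Arguments. Unset Strict Implicit. Unset Printing Implicit Defensive.
Import GRing.Theory.

Section HJ.

Definition pt (A : finType) n (w : {ffun 'I_n -> A}) (S : {set 'I_n}) (a : A)
  : {ffun 'I_n -> A} := [ffun i => if i \in S then a else w i].

Definition HJprop (A C : finType) := exists n, forall Φ : {ffun 'I_n -> A} -> C,
  exists w S, S != set0 /\ forall a b, Φ (pt w S a) = Φ (pt w S b).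

Definition catw (A : Type) n1 n2 (u : {ffun 'I_n1 -> A}) (v : {ffun 'I_n2 -> A}) :
  {ffun 'I_(n1 + n2) -> A} :=
  [ffun i => match split i with inl i1 => u i1 | inr i2 => v i2 end].

Definition catS n1 n2 (S1 : {set 'I_n1}) (S2 : {set 'I_n2}) : {set 'I_(n1 + n2)} :=
  [set i | match split i with inl i1 => i1 \in S1 | inr i2 => i2 \in S2 end].

Lemma pt_cat (A : finType) n1 n2 (u : {ffun 'I_n1 -> A}) (v : {ffun 'I_n2 -> A}) S1 S2 a :
  pt (catw u v) (catS S1 S2) a = catw (pt u S1 a) (pt v S2 a).
Proof.
apply/ffunP=> i; rewrite !ffunE inE; case: splitP => j _; by rewrite !ffunE.
Qed.

Lemma pt_set0 (A : finType) n (w : {ffun 'I_n -> A}) a : pt w set0 a = w.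
Proof. by apply/ffunP=> i; rewrite ffunE inE. Qed.

Lemma catS_neq0r n1 n2 (S1 : {set 'I_n1}) (S2 : {set 'I_n2}) : S2 != set0 -> catS S1 S2 != set0.
Proof.
case/set0Pn=> x hx; apply/set0Pn; exists (rshift n1 x).
by rewrite inE; case: splitP => j /= e; [have := ltn_ord j; rewrite -e ltnNge leq_addr |
  have -> : j = x by apply: val_inj; apply/eqP; rewrite -(eqn_add2l n1) -e].
Qed.

Lemma catS_neq0l n1 n2 (S1 : {set 'I_n1}) (S2 : {set 'I_n2}) : S1 != set0 -> catS S1 S2 != set0.
Proof.
case/set0Pn=> x hx; apply/set0Pn; exists (lshift n2 x).
rewrite inE; case: splitP => j /= e; first by have -> : j = x by apply: val_inj.
by have := ltn_ord x; rewrite e ltnNge leq_addr.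
Qed.

Lemma HJ1 (C : finType) : HJprop 'I_1 C.
Proof.
exists 1 => Φ; exists [ffun=> ord0], setT; split.
  by apply/set0Pn; exists ord0.
by move=> a b; rewrite (ord1 a) (ord1 b).
Qed.

Section Step.
Variable q : nat.
Hypothesis IHa : forall C : finType, HJprop 'I_q.+1 C.
Local Notation B := 'I_q.+2.
Local Notation emb := (lift ord_max : 'I_q.+1 -> B).
Local Notation star := (ord_max : B).

Definition embw n (v : {ffun 'I_n -> 'I_q.+1}) : {ffun 'I_n -> B} := [ffun i => emb (v i)].

Lemma pt_embw n (w : {ffun 'I_n -> 'I_q.+1}) S a : pt (embw w) S (emb a) = embw (pt w S a).
Proof. by apply/ffunP=> i; rewrite !ffunE; case: (i \in S). Qed.

Definition mono_line (C : finType) n (Φ : {ffun 'I_n -> B} -> C) :=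
  exists w S, S != set0 /\ forall a b, Φ (pt w S a) = Φ (pt w S b).

Definition focused (C : finType) n (Φ : {ffun 'I_n -> B} -> C) r :=
  exists (W : 'I_r -> {ffun 'I_n -> B}) (Ss : 'I_r -> {set 'I_n}) (col : 'I_r -> C) f,
  [/\ forall i, Ss i != set0, forall i, pt (W i) (Ss i) star = f,
      forall i a, Φ (pt (W i) (Ss i) (emb a)) = col i & injective col].

Lemma focus (C : finType) r : exists n, forall Φ : {ffun 'I_n -> B} -> C,
  mono_line Φ \/ focused Φ r.
Proof.
elim: r => [|r [n1 IHr]].
  exists 0 => Φ; right; exists (fun _ => [ffun=> star]), (fun _ => set0),
    (fun _ => Φ [ffun=> star]), [ffun=> star].
  by split; case.
have [n2 Hn2] := IHa ({ffun {ffun 'I_n1 -> B} -> C} : finType).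
exists (n1 + n2) => Φ.
pose Φ2 (v : {ffun 'I_n2 -> 'I_q.+1}) := [ffun u => Φ (catw u (embw v))].
have [w2 [S2 [S2n mono2]]] := Hn2 Φ2.
pose V b := pt (embw w2) S2 b.
pose a0 := (ord0 : 'I_q.+1).
pose Φ1 u := Φ (catw u (V (emb a0))).
have key : forall u a, Φ (catw u (V (emb a))) = Φ1 u.
  move=> u a; rewrite /Φ1 /V !pt_embw.
  have := congr1 (fun g : {ffun {ffun 'I_n1 -> B} -> C} => g u) (mono2 a a0).
  by rewrite /Φ2 /= !ffunE.
have [[w1 [S1 [S1n mono1]]]|[W [Ss [col [f [Ssn foc colE colI]]]]]] := IHr Φ1.
  left; exists (catw w1 (V (emb a0))), (catS S1 set0); split; first exact: catS_neq0l.
  by move=> a b; rewrite !pt_cat !pt_set0; apply: mono1.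
case: (boolP [exists i, Φ1 f == col i]) => [/existsP[i /eqP hi]|hno].
  left; exists (catw (W i) (V (emb a0))), (catS (Ss i) set0); split; first exact: catS_neq0l.
  have allc : forall b, Φ1 (pt (W i) (Ss i) b) = col i.
    move=> b; case: (unliftP ord_max b) => [a ->|->]; first exact: colE.
    by rewrite foc.
  by move=> a b; rewrite !pt_cat !pt_set0 -/(Φ1 _) -/(Φ1 _) !allc.
right.
pose W' (i : 'I_r.+1) := match unlift ord_max i with Some i' => catw (W i') (embw w2)
                          | None => catw f (embw w2) end.
pose S' (i : 'I_r.+1) := match unlift ord_max i with Some i' => catS (Ss i') S2
                          | None => catS set0 S2 end.
pose col' (i : 'I_r.+1) := match unlift ord_max i with Some i' => col i' | None => Φ1 f end.
exists W', S', col', (catw f (V star)); split.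
- by move=> i; rewrite /S'; case: (unlift _ _) => *; apply: catS_neq0r.
- move=> i; rewrite /W' /S'; case: (unlift _ _) => [i'|]; rewrite pt_cat -/(V star) ?foc //.
  by rewrite pt_set0.
- move=> i a; rewrite /W' /S' /col'; case: (unlift _ _) => [i'|]; rewrite pt_cat -/(V _) key //.
  by rewrite pt_set0.
- move=> i j; rewrite /col'.
  case: (unliftP ord_max i) => [i' ->|->]; case: (unliftP ord_max j) => [j' ->|->] //.
  + by move/colI=> ->.
  + by move=> e; case/existsP: hno; exists i'; rewrite e.
  + by move=> e; case/existsP: hno; exists j'; rewrite e.
Qed.

Lemma HJstep (C : finType) : HJprop B C.
Proof.
have [n Hn] := focus C #|C|; exists n => Φ.
have [//|[W [Ss [col [f [Ssn foc colE colI]]]]]] := Hn Φ.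
have : Φ f \in codom col by apply: inj_card_onto => //; rewrite card_ord.
case/codomP=> i hi.
exists (W i), (Ss i); split=> //.
have allc : forall b, Φ (pt (W i) (Ss i) b) = col i.
  move=> b; case: (unliftP ord_max b) => [a ->|->]; first exact: colE.
  by rewrite foc.
by move=> a b; rewrite !allc.
Qed.
End Step.

Lemma HJord q (C : finType) : HJprop 'I_q.+1 C.
Proof.
elim: q C => [|q IH] C; first exact: HJ1.
exact: HJstep.
Qed.

Theorem HJ (A C : finType) : (0 < #|A|)%N -> HJprop A C.
Proof.
move=> A0; have e : (#|A|.-1).+1 = #|A| by rewrite prednK.
pose iota_ (i : 'I_(#|A|.-1).+1) : A := enum_val (cast_ord e i).
pose kap (a : A) : 'I_(#|A|.-1).+1 := cast_ord (esym e) (enum_rank a).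
have ik : forall a, iota_ (kap a) = a.
  by move=> a; rewrite /iota_ /kap cast_ordKV enum_rankK.
have [n Hn] := HJord (#|A|.-1) C; exists n => Φ.
pose Φ' (u : {ffun 'I_n -> 'I_(#|A|.-1).+1}) := Φ [ffun i => iota_ (u i)].
have [w [S [Sn mono]]] := Hn Φ'.
exists [ffun i => iota_ (w i)], S; split=> // a b.
have eq : forall c, pt [ffun i => iota_ (w i)] S c = [ffun i => iota_ (pt w S (kap c) i)].
  by move=> c; apply/ffunP=> i; rewrite !ffunE; case: (i \in S); rewrite ?ffunE ?ik.
by rewrite !eq; apply: mono.
Qed.

End HJ.

Local Open Scope ring_scope.

Section Ech.
Variable F : fieldType.

Definition pivots (N K : nat) (X : 'M[F]_(N,K)) (p : 'I_K -> 'I_N) : Prop :=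
  [/\ (forall j1 j2 : 'I_K, (j1 < j2)%N -> (p j1 < p j2)%N),
      (forall (j l : 'I_K), X (p j) l = (j == l)%:R) &
      (forall (j : 'I_K) (i : 'I_N), (i < p j)%N -> X i j = 0)].

Definition isE N K (X : 'M[F]_(N,K)) := exists p, pivots X p.

Lemma piv_mono N K (X : 'M[F]_(N,K)) p : pivots X p ->
  forall j1 j2 : 'I_K, (j1 <= j2)%N -> (p j1 <= p j2)%N.
Proof.
case=> inc _ _ j1 j2; rewrite leq_eqVlt => /orP[/eqP e|lt].
  by have -> : j1 = j2 by apply: val_inj.
by apply: ltnW; apply: inc.
Qed.

Lemma piv_ge N K (X : 'M[F]_(N,K)) p : pivots X p -> forall j : 'I_K, (j <= p j)%N.
Proof.
move=> pv j; case: j => j; elim: j => [|j IH] Hj //=.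
have Hj' : (j < K)%N by apply: ltnW.
have := IH Hj'; case: pv => inc _ _.
have := inc (Ordinal Hj') (Ordinal Hj) (ltnSn j) => /= h1 h2.
exact: leq_ltn_trans h2 h1.
Qed.

Lemma pivots_mul N M K (R : 'M[F]_(N,M)) (X : 'M[F]_(M,K)) pR pX :
  pivots R pR -> pivots X pX -> pivots (R *m X) (pR \o pX).
Proof.
move=> hR hX; have mR := piv_mono hR.
case: hR => iR eR zR; case: hX => iX eX zX; split.
- by move=> j1 j2 lt; apply: iR; apply: iX.
- move=> j l /=; rewrite mxE (bigD1 (pX j)) //= eR eqxx mul1r big1 ?addr0 ?eX //.
  by move=> i ne; rewrite eR eq_sym (negbTE ne) mul0r.
- move=> j i lt /=; rewrite mxE big1 // => t _.
  case: (ltnP t (pX j)) => ht; first by rewrite zX // mulr0.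
  rewrite zR ?mul0r //; apply: (leq_trans lt); exact: mR.
Qed.

Lemma isE_mul N M K (R : 'M[F]_(N,M)) (X : 'M[F]_(M,K)) :
  isE R -> isE X -> isE (R *m X).
Proof. by move=> [pR hR] [pX hX]; exists (pR \o pX); apply: pivots_mul. Qed.

Lemma pivots1 n : pivots (1%:M : 'M[F]_n) id.
Proof.
split=> //.
- by move=> j l; rewrite mxE.
- by move=> j i lt; rewrite mxE; case: eqP => // e; rewrite e ltnn in lt.
Qed.

Lemma isE1 n : isE (1%:M : 'M[F]_n).
Proof. by exists id; apply: pivots1. Qed.

End Ech.

Section Mats.
Variable F : fieldType.

Definition topr M K (X : 'M[F]_(M.+1, K)) : 'M[F]_(M, K) :=
  \matrix_(i, j) X (lift ord_max i) j.
Definition ext N k (Y : 'M[F]_(N, k)) : 'M[F]_(N, k.+1) :=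
  \matrix_(i, j) match unlift ord_max j with Some j' => Y i j' | None => 0 end.
Definition leftc M k (Z : 'M[F]_(M, k.+1)) : 'M[F]_(M, k) :=
  \matrix_(i, j) Z i (lift ord_max j).

Lemma widen_lift n (j : 'I_n) : widen_ord (leqnSn n) j = lift ord_max j.
Proof. by apply: val_inj; rewrite /= /bump leqNgt ltn_ord. Qed.

Lemma lift_max_val n (j : 'I_n) : (lift ord_max j : nat) = j.
Proof. by rewrite /= /bump leqNgt ltn_ord. Qed.

Lemma ext_mul L M K (R : 'M[F]_(L, M)) (X : 'M[F]_(M.+1, K)) :
  ext R *m X = R *m topr X.
Proof.
apply/matrixP=> i l; rewrite !mxE big_ord_recr /= mxE unlift_none mul0r addr0.
by apply: eq_bigr => j _; rewrite !mxE widen_lift liftK.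
Qed.

Lemma mul_ext L M k (R : 'M[F]_(L, M)) (Z : 'M[F]_(M, k)) :
  R *m ext Z = ext (R *m Z).
Proof.
apply/matrixP=> i l; rewrite /ext !mxE; case: (unliftP ord_max l) => [l' ->|->].
  rewrite [RHS]mxE; apply: eq_bigr => j _; by rewrite mxE liftK.
by rewrite big1 // => j _; rewrite mxE unlift_none mulr0.
Qed.

Lemma ext_leftc M k (Y : 'M[F]_(M, k.+1)) : (forall i, Y i ord_max = 0) -> Y = ext (leftc Y).
Proof.
move=> h; apply/matrixP=> i j; rewrite !mxE.
case: (unliftP ord_max j) => [j' ->|->]; by rewrite ?liftK ?unlift_none ?mxE ?h.
Qed.

Definition botm NW L M (H : 'M[F]_(NW, L)) (R' : 'M[F]_(L, M)) (s : 'cV[F]_NW) : 'M[F]_(NW, M.+1) :=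
  \matrix_(i, j) match unlift ord_max j with Some j' => (H *m R') i j' | None => s i ord0 end.

Lemma botm_mul NW L M K (H : 'M[F]_(NW, L)) (R' : 'M[F]_(L, M)) s (X : 'M[F]_(M.+1, K)) :
  botm H R' s *m X = H *m R' *m topr X + s *m row ord_max X.
Proof.
apply/matrixP=> i l; rewrite !mxE big_ord_recr /= mxE unlift_none big_ord1 !mxE.
congr (_ + _); apply: eq_bigr => j _; by rewrite widen_lift /botm /topr !mxE liftK ?mxE.
Qed.

End Mats.

Section DS.
Variable F : finFieldType.

Definition RSprop k M (C : finType) := exists N, forall χ : 'M[F]_(N, k) -> C,
  exists R : 'M[F]_(N, M), isE R /\ exists c0, forall X : 'M[F]_(M, k), isE X -> χ (R *m X) = c0.

Definition Dprop k M (C : finType) := exists N, forall χ : 'M[F]_(N, k.+1) -> C,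
  exists R : 'M[F]_(N, M), isE R /\ exists φ : nat -> C,
    forall (X : 'M[F]_(M, k.+1)) p, pivots X p -> χ (R *m X) = φ (p ord_max).

Lemma bumpM n (j : 'I_n) : bump n j = j.
Proof. by rewrite /bump leqNgt ltn_ord. Qed.

Lemma pivots_R L1 NW M (R' : 'M[F]_(L1, M)) pR' (H : 'M[F]_(NW, L1)) (S : {set 'I_NW}) s0 :
  pivots R' pR' -> s0 \in S -> (forall i, i \in S -> (s0 <= i)%N) ->
  (forall t j, t \in S -> H t j = 0) ->
  isE (col_mx (ext R') (botm H R' (\col_t (t \in S)%:R))).
Proof.
move=> pv s0S s0min H0.
have [inc eR zR] := pv.
pose pR (j : 'I_M.+1) := match unlift ord_max j with
  Some j' => lshift NW (pR' j') | None => rshift L1 s0 end.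
exists pR; split.
- move=> j1 j2; rewrite /pR.
  case: (unliftP ord_max j1) => [j1' ->|->]; case: (unliftP ord_max j2) => [j2' ->|->] /=;
    rewrite ?bumpM.
  + by apply: inc.
  + by move=> _; apply: (leq_trans (ltn_ord _)); rewrite leq_addr.
  + by move=> h; have := ltn_ord j2'; rewrite ltnNge ltnW.
  + by rewrite ltnn.
- move=> j l; rewrite /pR.
  case: (unliftP ord_max j) => [j' ->|->]; rewrite ?col_mxEu ?col_mxEd /ext /botm !mxE.
  + case: (unliftP ord_max l) => [l' ->|->]; rewrite ?liftK ?unlift_none ?eR.
      by rewrite (inj_eq lift_inj).
    by rewrite eq_sym (negbTE (neq_lift _ _)).
  + case: (unliftP ord_max l) => [l' ->|->]; rewrite ?liftK ?unlift_none ?eR.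
      rewrite mxE big1 ?(negbTE (neq_lift _ _)) // => t _.
      by rewrite H0 ?mul0r.
    by rewrite s0S eqxx.
- move=> j i; rewrite /pR.
  case: (unliftP ord_max j) => [j' ->|->]; rewrite ?liftK ?unlift_none;
    case: (splitP i) => [i' ei|i'' ei]; rewrite ei.
  + move=> lt; have -> : i = lshift NW i' by apply: val_inj.
    by rewrite col_mxEu /ext mxE liftK zR.
  + by rewrite /= => lt; have := leq_trans (ltn_ord (pR' j')) (leq_addr i'' L1); rewrite ltnNge ltnW.
  + move=> _; have -> : i = lshift NW i' by apply: val_inj.
    by rewrite col_mxEu /ext mxE unlift_none.
  + rewrite /= ltn_add2l => lt; have -> : i = rshift L1 i'' by apply: val_inj.
    rewrite col_mxEd /botm !mxE unlift_none.
    case: (boolP (i'' \in S)) => // /s0min; by rewrite leqNgt lt.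
Qed.


Definition matw n L (w : {ffun 'I_n -> 'rV[F]_L}) : 'M[F]_(n, L) := \matrix_(t, j) w t ord0 j.

Lemma matw_pt n L (w : {ffun 'I_n -> 'rV[F]_L}) S (g : 'rV[F]_L) :
  matw (pt w S g) = \matrix_(t, j) (if t \in S then 0 else w t ord0 j) + \col_t (t \in S)%:R *m g.
Proof.
apply/matrixP=> t j; rewrite !mxE big_ord1 !mxE ffunE.
by case: (t \in S); rewrite ?mul1r ?mul0r ?add0r ?addr0.
Qed.

Lemma gamma_sol L K (T : 'M[F]_(L, K)) pT (x : 'rV[F]_K) : pivots T pT ->
  (\row_i \sum_(j < K) (i == pT j)%:R * x ord0 j) *m T = x.
Proof.
case=> _ eT _; apply/matrixP=> i0 l; rewrite (ord1 i0) !mxE.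
under eq_bigr do rewrite mxE big_distrl /=.
rewrite exchange_big /= (bigD1 l) //= [X in _ + X]big1 ?addr0.
  rewrite (bigD1 (pT l)) //= [X in _ + X]big1 ?addr0; first by rewrite eqxx mul1r eT eqxx mulr1.
  by move=> i /negbTE ne; rewrite ne mul0r mul0r.
move=> j ne; rewrite (bigD1 (pT j)) //= [X in _ + X]big1 ?addr0; first by rewrite eqxx mul1r eT (negbTE ne) mulr0.
by move=> i /negbTE ne'; rewrite ne' mul0r mul0r.
Qed.


Lemma Dstep k (RSk : forall M C, RSprop k M C) M (C : finType) : Dprop k M C.
Proof.
elim: M => [|M IH].
  exists 0 => χ; exists (0 : 'M[F]_(0,0)); split.
    by exists id; split; case.
  by exists (fun _ => χ 0) => X p _; case: (p ord_max).
have [L2 HA] := IH.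
have [L1 HB] := RSk L2 C.
have A0 : (0 < #|{: 'rV[F]_L1}|)%N by apply/card_gt0P; exists 0.
have [NW HW] := HJ ({ffun 'M[F]_(L1, k.+1) -> C} : finType) A0.
exists (L1 + NW) => χ.
pose Φ (ω : {ffun 'I_NW -> 'rV[F]_L1}) :=
  [ffun T : 'M[F]_(L1, k.+1) => χ (col_mx T (matw ω *m T))].
have [w [S [Sn mono]]] := HW Φ.
pose H := \matrix_(t, j) (if t \in S then 0 else w t ord0 j) : 'M[F]_(NW, L1).
pose s := \col_t (t \in S)%:R : 'cV[F]_NW.
have matH : forall g, matw (pt w S g) = H + s *m g by move=> g; rewrite matw_pt.
pose erow := \row_(j < k.+1) (j == ord_max)%:R : 'rV[F]_k.+1.
pose χB (Y : 'M[F]_(L1, k)) := χ (col_mx (ext Y) (H *m ext Y + s *m erow)).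
have [RB [RBE [cB HcB]]] := HB χB.
pose χA (Y : 'M[F]_(L2, k.+1)) := χ (col_mx (RB *m Y) (H *m (RB *m Y))).
have [RA [RAE [φA HφA]]] := HA χA.
pose R' := RB *m RA.
have R'E : isE R' by apply: isE_mul.
have [pR' pvR'] := R'E.
case/set0Pn: Sn => i0 i0S.
pose s0 := [arg min_(i < i0 in S) (i : nat)].
have [s0S s0min] : s0 \in S /\ forall i, i \in S -> (s0 <= i)%N.
  by rewrite /s0; case: arg_minnP.
exists (col_mx (ext R') (botm H R' s)); split.
  by apply: (pivots_R pvR' s0S s0min) => t j tS; rewrite mxE tS.
exists (fun n => if (n < M)%N then φA n else cB) => X p pv.
rewrite mul_col_mx ext_mul botm_mul.
case: (ltnP (p ord_max) M) => hp.
- have pl : forall j, (p j < M)%N.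
    move=> j; apply: leq_ltn_trans hp; apply: (piv_mono pv); exact: leq_ord.
  pose p' j := Ordinal (pl j).
  have pv' : pivots (topr X) p'.
    case: pv => inc eX zX; split.
    + by move=> j1 j2 /inc.
    + move=> j l; rewrite mxE.
      have -> : lift ord_max (p' j) = p j by apply: ord_inj; rewrite ?lift_max_val /= ?bumpM.
      exact: eX.
    + by move=> j i lt; rewrite mxE; apply: zX; rewrite ?lift_max_val /= ?bumpM.
  have pvT := pivots_mul pvR' pv'.
  have γT := gamma_sol (row ord_max X) pvT.
  rewrite -mulmxA -γT [s *m (_ *m _)]mulmxA -mulmxDl -matH.
  have := congr1 (fun g : {ffun 'M[F]_(L1, k.+1) -> C} => g (R' *m topr X)) (mono
     (\row_i \sum_(j < k.+1) (i == (pR' \o p') j)%:R * row ord_max X ord0 j) 0).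
  rewrite /Φ !ffunE => ->; rewrite matH mulmx0 addr0.
  have -> : R' *m topr X = RB *m (RA *m topr X) by rewrite /R' mulmxA.
  by rewrite -/(χA (RA *m topr X)) (HφA _ _ pv').
- have pM : p ord_max = ord_max.
    apply: val_inj; apply/eqP; rewrite eqn_leq hp andbT /=.
    by rewrite -ltnS ltn_ord.
  have lastcol : forall i, topr X i ord_max = 0.
    move=> i; rewrite mxE; case: pv => _ _ zX; apply: zX.
    by rewrite pM ?lift_max_val /= ?bumpM ltn_ord.
  have lastrow : row ord_max X = erow.
    apply/matrixP=> i1 l; rewrite !mxE; case: pv => _ eX _.
    by rewrite -{1}pM eX eq_sym.
  pose Z := leftc (topr X).
  have eZ : topr X = ext Z := ext_leftc lastcol.
  have pz : forall l : 'I_k, (p (lift ord_max l) < M)%N.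
    move=> l; case: pv => inc _ _.
    have := inc (lift ord_max l) ord_max; rewrite pM /= ?bumpM; apply; exact: ltn_ord.
  pose pZ l := Ordinal (pz l).
  have pvZ : pivots Z pZ.
    case: pv => inc eX zX; split.
    + by move=> j1 j2 lt; apply: inc; rewrite ?lift_max_val /= ?bumpM.
    + move=> j l; rewrite !mxE.
      have -> : lift ord_max (pZ j) = p (lift ord_max j) by apply: ord_inj; rewrite ?lift_max_val /= ?bumpM.
      by rewrite eX (inj_eq lift_inj).
    + by move=> j i lt; rewrite !mxE; apply: zX; rewrite ?lift_max_val /= ?bumpM.
  rewrite eZ lastrow -mulmxA [R' *m ext Z]mul_ext.
  rewrite -/(χB (R' *m Z)) /R' -mulmxA HcB //.
  by apply: isE_mul => //; exists pZ.
Qed.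

End DS.

Lemma sum_count_col (C : finType) (φ : nat -> C) (s : seq nat) :
  (\sum_(c : C) count (fun i => φ i == c) s = size s)%N.
Proof.
elim: s => [|x s IH] /=; first by rewrite big1.
rewrite big_split /= IH (bigD1 (φ x)) //= eqxx big1 ?addn0 ?add1n // => c ne.
by rewrite eq_sym (negbTE ne).
Qed.

Lemma pigeon (C : finType) (φ : nat -> C) (s : seq nat) m :
  (#|C| * m < size s)%N -> exists c, (m <= count (fun i => φ i == c) s)%N.
Proof.
move=> hs; case: (boolP [exists c, m <= count (fun i => φ i == c) s]%N).
  by case/existsP=> c hc; exists c.
move/existsPn=> h; exfalso.
have : (size s <= #|C| * m)%N.
  rewrite -(sum_count_col φ) -sum_nat_const; apply: leq_sum => c _.
  by have := h c; rewrite -ltnNge => /ltnW.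
by rewrite leqNgt hs.
Qed.

Section RS.
Variable F : finFieldType.

Lemma RS0 M (C : finType) : RSprop F 0 M C.
Proof.
exists M => χ; exists 1%:M; split; first exact: isE1.
by exists (χ 0) => X _; rewrite (thinmx0 (1%:M *m X)).
Qed.

Lemma RSsucc k (D : forall M C, Dprop F k M C) M (C : finType) : RSprop F k.+1 M C.
Proof.
pose M' := (k + (#|C| * M).+1)%N.
have [N HN] := D M' C.
exists N => χ.
have [R [RE [φ Hφ]]] := HN χ.
pose s := iota k (#|C| * M).+1.
have [c hc] : exists c, (M <= count (fun i => φ i == c) s)%N.
  by apply: pigeon; rewrite size_iota.
pose L := [seq i <- s | φ i == c].
have sizeL : (M <= size L)%N by rewrite size_filter.
have Ls : sorted ltn L by apply: sorted_filter; [exact: ltn_trans | exact: iota_ltn_sorted].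
have Lin : forall x, x \in L -> [/\ (k <= x)%N, (x < M')%N & φ x = c].
  move=> x; rewrite mem_filter mem_iota => /andP[/eqP e /andP[h1 h2]]; by split.
pose σ (i : nat) := if (i < k)%N then i else nth 0%N L (i - k).
have σin : forall i : 'I_M, (k <= i)%N -> nth 0%N L (i - k) \in L.
  move=> i hi; apply: mem_nth; apply: leq_trans sizeL.
  by apply: leq_ltn_trans (ltn_ord i); apply: leq_subr.
have σlt : forall i : 'I_M, (σ i < M')%N.
  move=> i; rewrite /σ; case: (ltnP i k) => hi.
    by apply: (leq_trans hi); rewrite leq_addr.
  by case: (Lin _ (σin i hi)).
pose σ' (i : 'I_M) : 'I_M' := Ordinal (σlt i).
have σinc : forall i j : 'I_M, (i < j)%N -> (σ' i < σ' j)%N.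
  move=> i j lt; rewrite /= /σ.
  case: (ltnP i k) => hi; case: (ltnP j k) => hj.
  - exact: lt.
  - by case: (Lin _ (σin j hj)) => h1 _ _; apply: leq_trans h1.
  - by have := leq_ltn_trans hi (ltn_trans lt hj); rewrite ltnn.
  - apply: (sorted_ltn_nth ltn_trans 0%N Ls).
    + by rewrite inE; apply: leq_trans sizeL; apply: leq_ltn_trans (ltn_ord i); apply: leq_subr.
    + by rewrite inE; apply: leq_trans sizeL; apply: leq_ltn_trans (ltn_ord j); apply: leq_subr.
    + by apply: ltn_sub2r => //; apply: leq_ltn_trans hi lt.
pose Sel := \matrix_(i < M', j < M) (i == σ' j)%:R : 'M[F]_(M', M).
have pvSel : pivots Sel σ'.
  split.
  - exact: σinc.
  - have σinj : injective σ'.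
      move=> j l e; apply: ord_inj; case: (ltngtP j l) => // h.
        by have := σinc _ _ h; rewrite e ltnn.
      by have := σinc _ _ h; rewrite e ltnn.
    by move=> j l; rewrite mxE (inj_eq σinj).
  - move=> j i lt; rewrite mxE; case: eqP => // e; by rewrite e ltnn in lt.
exists (R *m Sel); split; first by apply: isE_mul => //; exists σ'.
exists c => X [pX pvX].
rewrite -mulmxA (Hφ _ _ (pivots_mul pvSel pvX)) /= /σ.
have hk : (k <= pX ord_max)%N by apply: (leq_trans _ (piv_ge pvX ord_max)).
rewrite ltnNge hk /=.
by case: (Lin _ (σin _ hk)).
Qed.

Lemma RS_all k M (C : finType) : RSprop F k M C.
Proof.
elim: k M C => [|k IH] M C; first exact: RS0.
apply: RSsucc => M' C'; exact: Dstep.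
Qed.

End RS.

Lemma incr_ge K (f : 'I_K -> nat) : (forall i j : 'I_K, (i < j)%N -> (f i < f j)%N) ->
  forall j : 'I_K, (j <= f j)%N.
Proof.
move=> inc [j hj]; elim: j hj => [|j IH] hj //=.
have hj' : (j < K)%N by apply: ltnW.
have := IH hj'; have := inc (Ordinal hj') (Ordinal hj) (ltnSn j) => /= h1 h2.
exact: leq_ltn_trans h2 h1.
Qed.

Lemma incr_id K (f : 'I_K -> 'I_K) : (forall i j : 'I_K, (i < j)%N -> (f i < f j)%N) ->
  forall j, f j = j.
Proof.
move=> inc j; apply: ord_inj; apply/eqP; rewrite eqn_leq (incr_ge inc) andbT.
pose g (i : 'I_K) := (K.-1 - f (rev_ord i))%N.
have ginc : forall i j : 'I_K, (i < j)%N -> (g i < g j)%N.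
  move=> i1 i2 lt; rewrite /g; have h := inc (rev_ord i2) (rev_ord i1).
  have : (rev_ord i2 < rev_ord i1)%N by rewrite /=; have := ltn_ord i2; lia.
  move/h => h'; have := ltn_ord (f (rev_ord i1)); have := ltn_ord (f (rev_ord i2)); lia.
have := incr_ge ginc (rev_ord j); rewrite /g rev_ordK /=.
have := ltn_ord (f j); have := ltn_ord j; lia.
Qed.

Section Uniq.
Variable F : fieldType.

Lemma isE_uniq N K (P : 'M[F]_(N,K)) (U : 'M[F]_K) : isE P -> isE (P *m U) -> U = 1%:M.
Proof.
move=> [pP pvP] [q pvQ].
have mP := piv_mono pvP.
have [incP eP zP] := pvP; have [incQ eQ zQ] := pvQ.
have rowP : forall i l, (P *m U) (pP i) l = U i l.
  move=> i l; rewrite mxE (bigD1 i) //= eP eqxx mul1r big1 ?addr0 // => u ne.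
  by rewrite eP eq_sym (negbTE ne) mul0r.
have ex : forall j, exists i, U i j != 0.
  move=> j; case: (boolP [exists i, U i j != 0]) => [/existsP//|/existsPn h].
  have := eQ j j; rewrite eqxx mxE big1 => [|i _]; last by rewrite (eqP (negbNE (h i))) mulr0.
  by move/eqP; rewrite eq_sym oner_eq0.
have key : forall j, exists i, pP i = q j /\ forall l, U i l = (j == l)%:R.
  move=> j; have [i0 hi0] := ex j.
  case: (@arg_minnP _ i0 (fun i => U i j != 0) (fun i : 'I_K => (i : nat)) hi0) => i hi imin.
  have col_above : forall t : 'I_N, (t < pP i)%N -> (P *m U) t j = 0.
    move=> t lt; rewrite mxE big1 // => u _.
    case: (ltnP u i) => hu.
      case: (eqVneq (U u j) 0) => [->|ne]; first by rewrite mulr0.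
      by have := imin u ne; rewrite leqNgt hu.
    by rewrite zP ?mul0r // (leq_trans lt) // mP.
  have e : pP i = q j.
    apply: ord_inj; case: (ltngtP (pP i) (q j)) => // h.
      by have := zQ j _ h; rewrite rowP => /eqP; rewrite (negbTE hi).
    by have := col_above _ h; rewrite eQ eqxx => /eqP; rewrite oner_eq0.
  by exists i; split=> // l; rewrite -(eQ j l) -e rowP.
have [f hf] := fin_all_exists key.
have finc : forall i j : 'I_K, (i < j)%N -> (f i < f j)%N.
  move=> i j lt; rewrite ltnNge; apply/negP => le.
  have := mP _ _ le; rewrite !(proj1 (hf _)) leqNgt => /negP; apply.
  exact: incQ.
have fid := incr_id finc.
apply/matrixP=> i l; rewrite mxE.
by have := proj2 (hf i) l; rewrite fid.
Qed.

End Uniq.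

Section Exist.
Variable F : fieldType.

Definition isEp N K (X : 'M[F]_(N,K)) r (p : 'I_r -> 'I_N) :=
  [/\ (r <= K)%N,
      forall j1 j2 : 'I_r, (j1 < j2)%N -> (p j1 < p j2)%N,
      forall (j : 'I_r) (l : 'I_K), X (p j) l = ((j : nat) == l)%:R,
      forall (j : 'I_r) (l : 'I_K) (i : 'I_N), (j : nat) = l -> (i < p j)%N -> X i l = 0 &
      forall (l : 'I_K) (i : 'I_N), (r <= l)%N -> X i l = 0].


Lemma I0F (x : 'I_0) : False.
Proof. by case: x. Qed.

Lemma sum_delta n (i : 'I_n) (f : 'I_n -> F) : \sum_u (i == u)%:R * f u = f i.
Proof.
rewrite (bigD1 i) //= eqxx mul1r big1 ?addr0 // => u ne.
by rewrite eq_sym (negbTE ne) mul0r.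
Qed.

Lemma sum_delta_r n (i : 'I_n) (f : 'I_n -> F) : \sum_u f u * (u == i)%:R = f i.
Proof.
rewrite (bigD1 i) //= eqxx mulr1 big1 ?addr0 // => u ne.
by rewrite (negbTE ne) mulr0.
Qed.

Lemma topr_mul M K L (A : 'M[F]_(M.+1, K)) (G : 'M[F]_(K, L)) : topr (A *m G) = topr A *m G.
Proof. by apply/matrixP=> i j; rewrite !mxE; apply: eq_bigr => u _; rewrite mxE. Qed.

Lemma exists_Ep N K (A : 'M[F]_(N,K)) :
  exists G r p, G \in unitmx /\ @isEp N K (A *m G) r p.
Proof.
elim: N A => [|N IH] A.
  exists 1%:M, 0%N, id; split; first exact: unitmx1.
  by split=> //; (move=> x; case: (I0F x)) || (move=> l x; case: (I0F x)).
have [G' [r' [p' [G'u [hr inc eX zX zc]]]]] := IH (topr A).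
pose Y := A *m G'.
have eY : forall (i : 'I_N) l, Y (lift ord_max i) l = (topr A *m G') i l.
  by move=> i l; rewrite /Y -topr_mul [RHS]mxE.
pose y := row ord_max Y.
case: (boolP [exists l : 'I_K, (r' <= l)%N && (y ord0 l != 0)]) => [/existsP[j0 /andP[hj0 yj0]]|hno].
-
  have r'K : (r' < K)%N by apply: leq_trans (ltn_ord j0); rewrite ltnS.
  pose rr := Ordinal r'K.
  pose y0 : F := y ord0 j0.
  pose v (j : 'I_K) : F := y ord0 j - (j == j0)%:R.
  pose T := \matrix_(i, j) ((i == j)%:R - (i == j0)%:R * (v j / y0)) : 'M[F]_K.
  pose T' := \matrix_(i, j) ((i == j)%:R + (i == j0)%:R * v j) : 'M[F]_K.
  have TT' : T *m T' = 1%:M.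
    apply/matrixP=> i j; rewrite !mxE.
    under eq_bigr do rewrite !mxE mulrBl.
    rewrite sumrB sum_delta ?mxE.
    under eq_bigr do rewrite -mulrA.
    rewrite -mulr_sumr.
    under eq_bigr do rewrite mulrDr.
    rewrite big_split /= sum_delta_r.
    under eq_bigr do rewrite mulrCA eq_sym.
    rewrite sum_delta.
    have vj0 : v j0 = y0 - 1 by rewrite /v eqxx.
    rewrite vj0; case: (i == j0); rewrite ?mul1r ?mul0r ?addr0 ?subr0 //.
    by field.
  have Tu : T \in unitmx by case: (mulmx1_unit TT').
  pose G := G' *m T *m tperm_mx j0 rr.
  exists G, r'.+1, (fun j : 'I_r'.+1 => match unlift ord_max j with
         Some j' => lift ord_max (p' j') | None => ord_max end).
  split.
    by rewrite /G !unitmx_mul G'u Tu unitmx_perm.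
  have YT : forall t j, (Y *m T) t j = Y t j - Y t j0 * (v j / y0).
    move=> t j; rewrite mxE.
    rewrite /T; under eq_bigr do rewrite [X in _ * X]mxE mulrBr.
    rewrite sumrB; congr (_ - _); last first.
      by rewrite (bigD1 j0) //= eqxx mul1r big1 ?addr0 // => u /negbTE ne; rewrite ne mul0r mulr0.
    by rewrite (bigD1 j) //= eqxx mulr1 big1 ?addr0 // => u /negbTE ne; rewrite ne mulr0.
  have AG : forall t j, (A *m G) t j = (Y *m T) t (tperm j0 rr j).
    move=> t j; rewrite /G !mulmxA -/Y -xcolE [LHS]mxE.
    done.
  have topj0 : forall (i : 'I_N) (l : 'I_K), (r' <= l)%N -> Y (lift ord_max i) l = 0.
    by move=> i l hl; rewrite eY zc.
  have top : forall (i : 'I_N) j, (A *m G) (lift ord_max i) j = (topr A *m G') i j.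
    move=> i j; rewrite AG YT (topj0 i j0 hj0) mul0r subr0 eY.
    by case: (tpermP j0 rr j) => [->|->|_ _] //; rewrite !zc.
  have bot : forall j, (A *m G) ord_max j = (rr == j)%:R.
    move=> j; rewrite AG YT.
    have -> : Y ord_max j0 = y0 by rewrite /y0 /y [RHS]mxE.
    rewrite mulrC divfK //.
    have -> : forall u, Y ord_max u = y ord0 u by move=> u; rewrite /y [RHS]mxE.
    rewrite /v opprB addrC subrK.
    case: (tpermP j0 rr j) => [->|->|/eqP n1 /eqP n2].
    + by [].
    + by rewrite !eqxx.
    + by rewrite (negbTE n1) eq_sym (negbTE n2).
  split.
  + exact: r'K.
  + move=> j1 j2.
    case: (unliftP ord_max j1) => [j1' ->|->]; case: (unliftP ord_max j2) => [j2' ->|->];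
      rewrite ?liftK ?unlift_none ?lift_max_val /=.
    * by apply: inc.
    * by move=> _; rewrite ltn_ord.
    * by case: j2' => m /= hm h; lia.
    * by rewrite ltnn.
  + move=> j l.
    case: (unliftP ord_max j) => [j' ->|->]; rewrite ?liftK ?unlift_none.
      by rewrite top eX /= bumpM.
    by rewrite bot.
  + move=> j l i ejl lt.
    case: (unliftP ord_max j) => [j' ej|ej]; rewrite ej ?liftK ?unlift_none in lt ejl *.
      case: (unliftP ord_max i) => [i' ei|ei]; rewrite ei in lt *.
        rewrite top; apply: (zX j'); first by rewrite -ejl /= bumpM.
        by move: lt; rewrite /= !bumpM.
      by move: lt; rewrite /= bumpM => h; have := ltn_ord (p' j'); lia.
    case: (unliftP ord_max i) => [i' ei|ei]; rewrite ei in lt *.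
      by rewrite top zc //= -ejl.
    by rewrite ltnn in lt.
  + move=> l i hl.
    case: (unliftP ord_max i) => [i' ->|->].
      by rewrite top zc // ltnW.
    by rewrite bot; case: eqP => // e; rewrite -e /= ltnn in hl.
-
  exists G', r', (fun j => lift ord_max (p' j)); split=> //.
  split=> //.
  + by move=> j1 j2 lt; rewrite /= !bumpM; apply: inc.
  + by move=> j l; rewrite eY eX.
  + move=> j l i ejl lt.
    case: (unliftP ord_max i) => [i' ei|ei]; rewrite ei in lt *.
      by rewrite eY (zX j) //; move: lt; rewrite /= !bumpM.
    by move: lt; rewrite /= bumpM => h; have := ltn_ord (p' j); lia.
  + move=> l i hl.
    case: (unliftP ord_max i) => [i' ->|->].
      by rewrite eY zc.
    apply/eqP; apply: contraNT hno => nz; apply/existsP; exists l.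
    by rewrite hl /y mxE nz.
Qed.

End Exist.

Section Bridge.
Variable F : fieldType.

Lemma zero_col_rank N K (X : 'M[F]_(N,K)) (r : 'I_K) : (forall i, X i r = 0) -> (\rank X < K)%N.
Proof.
case: K X r => [|K] X r; first by case: r.
move=> h.
pose X' := \matrix_(i, j) X i (lift r j) : 'M[F]_(N, K).
pose S := \matrix_(j, l) (lift r j == l)%:R : 'M[F]_(K, K.+1).
have XS : X = X' *m S.
  apply/matrixP=> i l; rewrite mxE.
  case: (unliftP r l) => [l' ->|->].
    rewrite (bigD1 l') //= !mxE eqxx mulr1 big1 ?addr0 // => j ne.
    by rewrite !mxE (inj_eq lift_inj) (negbTE ne) mulr0.
  rewrite h big1 // => j _; rewrite !mxE eq_sym (negbTE (neq_lift _ _)) mulr0.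
  done.
rewrite XS; apply: leq_ltn_trans (mxrankM_maxr _ _) _.
by apply: leq_ltn_trans (rank_leq_row S) _.
Qed.

Lemma exists_E N K (A : 'M[F]_(N,K)) : \rank A = K ->
  exists E G, isE E /\ G \in unitmx /\ A = E *m G.
Proof.
move=> rA.
have [G [r [p [Gu [hr inc eX zX zc]]]]] := exists_Ep A.
have rAG : \rank (A *m G) = K by rewrite mxrankMfree ?row_free_unit.
have rK : r = K.
  apply/eqP; rewrite eqn_leq hr /=; rewrite leqNgt; apply/negP => lt.
  have := @zero_col_rank N K (A *m G) (Ordinal lt) (fun i => zc (Ordinal lt) i (leqnn r)).
  by rewrite rAG ltnn.
subst r.
exists (A *m G), (invmx G); split; last by rewrite unitmx_inv mulmxK.
exists p; split.
- exact: inc.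
- exact: eX.
- by move=> j i lt; apply: (zX j).
Qed.

Lemma colspanE p q (A : 'M[F]_(p,q)) t (u : 'I_q) (l : 'I_p) :
  colspan_lt A t u l = if (u < t)%N then A l u else 0.
Proof. by rewrite mxE; case: ifP; rewrite !mxE. Qed.

Lemma pidE n (r : nat) (i j : 'I_n) : (pid_mx r : 'M[F]_n) i j = ((i == j :> nat) && (i < r)%N)%:R.
Proof. by rewrite mxE. Qed.

Lemma isE_rcef N K (X : 'M[F]_(N,K)) : isE X -> is_rcef X /\ \rank X = K.
Proof.
move=> [p pv]; have mP := piv_mono pv; have [inc eX zX] := pv.
have rf : row_full X.
  apply/row_fullP; exists (\matrix_(a, t) (t == p a)%:R).
  apply/matrixP=> a l; rewrite !mxE (bigD1 (p a)) //= mxE eqxx mul1r eX big1 ?addr0.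
    by rewrite eqE /=.
  by move=> t ne; rewrite mxE (negbTE ne) mul0r.
split; last exact/eqP.
apply/existsP; exists ord_max; apply/existsP; exists [ffun i => p i]; apply/and3P; split.
- apply/forallP=> i1; apply/forallP=> i2; apply/implyP=> /andP[lt _]; rewrite !ffunE.
  exact: inc.
- apply/forallP=> i; apply/implyP=> _; rewrite ffunE; apply/andP; split.
    apply/eqP/matrixP=> l z; rewrite (ord1 z) !mxE eX eq_sym.
    by case: (l == i).
  apply/andP; split.
    apply/submxP; exists (colspan_lt X^T (p i)).
    apply/matrixP=> t l; rewrite [RHS]mxE (bigD1 l) //= pidE eqxx /= big1 ?addr0; last first.
      by move=> u ne; rewrite pidE (_ : (u == l :> nat) = false) ?mulr0 //; exact/negbTE.
    rewrite colspanE mxE; case: ltnP => lt; rewrite ?mul0r //.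
    case: (ltnP l i) => li; first by rewrite mulr1.
    by rewrite mulr0 zX // (leq_trans lt) // mP.
  apply/submxP; exists (\matrix_(a, t) ((a < i)%N && (t == p a))%:R).
  apply/matrixP=> a l; rewrite pidE mxE.
  case: (ltnP a i) => ai.
    rewrite (bigD1 (p a)) //= mxE ai eqxx mul1r colspanE mxE.
    have -> : (p a < p i)%N by apply: inc.
    rewrite eX big1 ?addr0.
      by rewrite andbT.
    by move=> t ne; rewrite mxE ai (negbTE ne) mul0r.
  by rewrite andbF big1 // => t _; rewrite mxE ltnNge ai mul0r.
- rewrite trmxK pid_mx_1; apply/andP; split; first exact: submx1.
  by rewrite sub1mx.
Qed.

Lemma rcef_isE N K (Y : 'M[F]_(N,K)) : is_rcef Y -> \rank Y = K -> isE Y.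
Proof.
case/existsP=> p0 /existsP[j /and3P[/forallP h1 /forallP h2 h3]] rY.
have p0K : (p0 : nat) = K.
  have := eqmx_rank h3; rewrite trmxK rY rank_pid_mx //; exact: (leq_ord p0).
have lp : forall i : 'I_K, (i < p0)%N by move=> i; rewrite p0K ltn_ord.
exists (fun i => j i); split.
- move=> i1 i2 lt; have := h1 i1 => /forallP /(_ i2) /implyP; apply.
  by rewrite lt lp.
- move=> i l; have := h2 i; rewrite lp /= => /andP[/eqP hc _].
  have := congr1 (fun M : 'M[F]_(K,1) => M l ord0) hc; rewrite !mxE => ->.
  by rewrite eq_sym; case: (i == l).
- move=> i t lt; have := h2 i; rewrite lp /= => /andP[_ /andP[hs _]].
  have := submx_trans (row_sub t (colspan_lt Y^T (j i))) hs.
  case/submxP=> D hD.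
  have := congr1 (fun M : 'M[F]_(1,K) => M ord0 i) hD; rewrite [LHS]mxE colspanE lt [Y^T i t]mxE [RHS]mxE => ->.
  rewrite big1 // => u _; rewrite pidE.
  case: eqP => [e|]; last by rewrite mulr0.
  by rewrite e ltnn mulr0.
Qed.

End Bridge.

Unset Implicit Arguments.

Theorem theorem5p4 (F : finFieldType) (k m r : nat) :
  exists n : nat, forall c : 'M[F]_(n, k) -> 'I_r,
    exists R : 'M[F]_(n, m), in_E R /\
      exists chat : 'M[F]_k -> 'I_r,
        forall A : 'M[F]_(m, k), \rank A = k ->
          c (R *m A) = chat (tau (R *m A)).
Proof.
have [n Hn] := RS_all F k m ({ffun 'M[F]_k -> 'I_r} : finType).
exists n => c.
pose χ (E : 'M[F]_(n,k)) := [ffun T : 'M[F]_k => c (E *m T)].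
have [R [RE [c0 Hc0]]] := Hn χ.
exists R; split.
  by have [h1 h2] := isE_rcef RE; rewrite /in_E h2 eqxx h1.
exists (fun T => c0 (invmx T)) => A rA.
have [E [G [EE [Gu AEG]]]] := exists_E rA.
have PE : isE (R *m E) := isE_mul RE EE.
have key : c (R *m A) = c0 G.
  have := congr1 (fun f : {ffun 'M[F]_k -> 'I_r} => f G) (Hc0 E EE).
  by rewrite /χ ffunE AEG mulmxA => <-.
rewrite key /tau.
case: pickP => [T /andP[Tu hT] | hno].
  have eA : R *m A *m T = R *m E *m (G *m T) by rewrite AEG !mulmxA.
  have rk : \rank (R *m A *m T) = k.
    by rewrite eA mxrankMfree ?row_free_unit ?unitmx_mul ?Gu ?Tu // (isE_rcef PE).2.
  have PT := rcef_isE hT rk.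
  rewrite eA in PT.
  have GT1 : G *m T = 1%:M := isE_uniq PE PT.
  have -> : T = invmx G by rewrite -[T]mul1mx -(mulVmx Gu) -mulmxA GT1 mulmx1.
  by rewrite invmxK.
exfalso; have := hno (invmx G); rewrite unitmx_inv Gu /=.
have -> : R *m A *m invmx G = R *m E by rewrite AEG mulmxA mulmxK.
by rewrite (isE_rcef PE).1.
Qed.
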